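(* Let $A$ and $B$ be rings, $f: A\to B$ a ring homomorphism and $J$ a proper ideal of $B$ such that the ideal $f^{-1}(J)$ of $A$ is semicommutative. If $f(A)+J$ is a weak Armendariz ring, then $A\bowtie^{f}J$ is a weak Armendariz ring.
   Context: All rings are associative with identity (not necessarily commutative), ring homomorphisms are unital, and ideals are two-sided. $\mathrm{nil}(R)$ denotes the set of nilpotent elements of a ring $R$. For a ring homomorphism $f:A\to B$ and an ideal $J$ of $B$, the amalgamation is the subring $A\bowtie^{f}J=\{(a,f(a)+j)\mid a\in A,\ j\in J\}$ of $A\times B$; $f(A)+J=\{f(a)+j: a\in A, j\in J\}$ is a subring of $B$. A ring $R$ (possibly without identity, e.g. an ideal regarded as a ring) is semicommutative if for all $a,b\in R$, $ab=0$ implies $aRb=0$. A ring $R$ is weak Armendariz if whenever $p(x)=\sum_{i=0}^n a_ix^i$ and $q(x)=\sum_{j=0}^m b_jx^j$ in $R[x]$ satisfy $p(x)q(x)=0$, then $a_ib_j\in\mathrm{nil}(R)$ for all $i,j$. *)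

(* Defs.v *)
From HB Require Import structures.
From mathcomp Require Import all_boot all_order all_algebra.
Set Implicit Arguments. Unset Strict Implicit. Unset Printing Implicit Defensive.
Import GRing.Theory.
Local Open Scope ring_scope.

Definition is_nilpotent (R : nzRingType) (x : R) : Prop := exists n : nat, x ^+ n = 0.

Definition is_ideal (R : nzRingType) (J : R -> Prop) : Prop :=
  [/\ J 0,
      (forall x y, J x -> J y -> J (x + y)),
      (forall x, J x -> J (- x)),
      (forall r x, J x -> J (r * x)) &
      (forall r x, J x -> J (x * r))].

Definition is_proper_ideal (R : nzRingType) (J : R -> Prop) : Prop :=
  is_ideal J /\ ~ J 1.

Definition semicommutative_on (R : nzRingType) (S : R -> Prop) : Prop :=
  forall a b, S a -> S b -> a * b = 0 -> forall r, S r -> a * r * b = 0.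

(* Weak Armendariz property of the subring S of R (S[x] viewed inside R[x]):
   if p, q have all coefficients in S and p q = 0 then every a_i b_j is
   nilpotent (nilpotency in S coincides with nilpotency in R). *)
Definition weak_armendariz_on (R : nzRingType) (S : R -> Prop) : Prop :=
  forall p q : {poly R},
    (forall i, S p`_i) -> (forall i, S q`_i) -> p * q = 0 ->
    forall i j, is_nilpotent (p`_i * q`_j).

Definition preimage (A B : nzRingType) (f : A -> B) (J : B -> Prop) : A -> Prop :=
  fun a => J (f a).

Definition image_plus (A B : nzRingType) (f : A -> B) (J : B -> Prop) : B -> Prop :=
  fun y => exists a j, J j /\ y = f a + j.

Definition amalgamation (A B : nzRingType) (f : A -> B) (J : B -> Prop)
  : (A * B)%type -> Prop :=
  fun x => exists a j, J j /\ x = (a, f a + j).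

(* Main.v *)
Require Import Defs.
From HB Require Import structures.
From mathcomp Require Import all_boot all_order all_algebra zify.
Local Open Scope ring_scope.
Import GRing.Theory.

Section Core.
Variables (A : nzRingType) (K : A -> Prop).
Hypothesis HK : is_ideal K.
Hypothesis HS : semicommutative_on K.

Definition KA (u : A) := u = 1 \/ K u.

Lemma KA_mul u v : KA u -> KA v -> KA (u * v).
Proof.
case: HK => _ _ _ Hl Hr.
case=> [->|Ku]; first by rewrite mul1r.
case=> [->|Kv]; first by rewrite mulr1; right.
by right; apply: Hr.
Qed.

Lemma KA_exp x n : K x -> KA (x ^+ n).
Proof.
move=> Kx; elim: n => [|n IH]; first by left.
by rewrite exprS; apply: KA_mul => //; right.
Qed.

Lemma SC1 a b r : KA a -> KA b -> K r -> a * b = 0 -> a * r * b = 0.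
Proof.
case=> [->|Ka]; first by rewrite mul1r => _ _ ->; rewrite mulr0.
case=> [->|Kb]; first by rewrite !mulr1 => _ ->; rewrite mul0r.
by move=> Kr ab; apply: HS.
Qed.

Lemma word0 x y n : K x -> K y -> x ^+ n = 0 -> forall (w : seq bool) j l,
  (n <= j + count id w + l)%N ->
  x ^+ j * \prod_(b <- w) (if b then x else y) * x ^+ l = 0.
Proof.
move=> Kx Ky xn; elim=> [|b w IH] j l /=.
  by rewrite big_nil mulr1 -exprD addn0 => H; rewrite -(subnK H) exprD xn mulr0.
rewrite big_cons; case: b => /= H.
  by rewrite mulrA -exprSr; apply: IH; move: H; rewrite add1n; lia.
rewrite mulrA -(mulrA _ _ (x ^+ l)); apply: SC1 => //; first exact: KA_exp.
  apply: KA_mul; last exact: KA_exp.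
  elim: w {IH H} => [|c w IHw]; first by rewrite big_nil; left.
  by rewrite big_cons; apply: KA_mul => //; case: c; right.
by rewrite mulrA; apply: IH.
Qed.

Definition N (x : A) := exists n, x ^+ n = 0.

Lemma Nadd x y : K x -> K y -> N x -> N y -> N (x + y).
Proof.
move=> Kx Ky [n xn] [m ym]; exists (n + m)%N.
have -> : (x+y)^+(n+m) = \prod_(i < n+m) (x+y) by rewrite prodr_const card_ord.
have -> : x + y = \sum_(b : bool) (if b then x else y) by rewrite big_bool.
rewrite (bigA_distr_bigA (fun (i : 'I_(n+m)) (b : bool) => if b then x else y)).
apply: big1 => g _.
have -> : \prod_(i < n + m) (if g i then x else y) =
   \prod_(b <- [seq g i | i <- index_enum 'I_(n+m)]) (if b then x else y).
  by rewrite big_map.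
set w := [seq _ | _ <- _].
have : (count id w + count (predC id) w = n + m)%N.
  by rewrite count_predC size_map /index_enum unlock -enumT size_enum_ord.
move=> Hc.
case: (leqP n (count id w)) => Hn.
  have Hn' : (n <= 0 + count id w + 0)%N by lia.
  by have := @word0 x y n Kx Ky xn w 0 0 Hn'; rewrite expr0 mul1r mulr1.
have Hcn : count (predC id) w = count negb w by apply: eq_count.
have Hm : (m <= count negb w)%N by lia.
have Hm' : (m <= 0 + count id (map negb w) + 0)%N.
  rewrite count_map (@eq_count _ _ negb) //; lia.
have := @word0 y x m Ky Kx ym (map negb w) 0 0 Hm'.
rewrite expr0 mul1r mulr1 big_map => <-.
by apply: eq_bigr => b _; case: b.
Qed.

Lemma Nopp x : N x -> N (- x).
Proof. by case=> n xn; exists n; rewrite exprNn xn mulr0. Qed.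

Lemma pow_swap (a b : A) n : (a * b) ^+ n.+1 = a * (b * a) ^+ n * b.
Proof.
elim: n => [|n IH]; first by rewrite expr1 expr0 mulr1.
by rewrite exprSr IH exprSr !mulrA.
Qed.

Lemma Nswap a b : N (a * b) -> N (b * a).
Proof. by case=> n H; exists n.+1; rewrite pow_swap H mulr0 mul0r. Qed.

Lemma xr_pow x r n : K x -> K r -> x ^+ n = 0 -> forall k j l,
  (n <= j + k + l)%N -> x ^+ j * (x * r) ^+ k * x ^+ l = 0.
Proof.
move=> Kx Kr xn; elim=> [|k IH] j l.
  by rewrite expr0 mulr1 -exprD addn0 => H; rewrite -(subnK H) exprD xn mulr0.
move=> H; rewrite exprS !mulrA -exprSr -!mulrA mulrA.
have Kxr : K (x * r) by case: HK => _ _ _ _ Hr; apply: Hr.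
apply: SC1 => //; first exact: KA_exp.
  by apply: KA_mul; apply: KA_exp.
by rewrite mulrA; apply: IH; lia.
Qed.

Lemma NmulR x r : K x -> K r -> N x -> N (x * r).
Proof.
move=> Kx Kr [n xn]; exists n.
have := @xr_pow x r n Kx Kr xn n 0 0 (leq_addr _ _).
by rewrite expr0 mul1r mulr1.
Qed.

Lemma NmulL x r : K x -> K r -> N x -> N (r * x).
Proof. by move=> Kx Kr Nx; apply: Nswap; apply: NmulR. Qed.

Lemma Nsq x : N (x * x) -> N x.
Proof. by case=> n H; exists (2 * n)%N; rewrite exprM expr2. Qed.

Lemma core (P Q : nat -> A) : (forall i, K (P i)) -> (forall j, K (Q j)) ->
  (forall k, \sum_(i < k.+1) P i * Q (k - i)%N = 0) -> forall i j, N (P i * Q j).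
Proof.
move=> KP KQ Hsum.
case: HK => K0 Kadd Kopp Kl Kr.
suff H : forall k t, (t <= k)%N -> N (P t * Q (k - t)%N).
  by move=> i j; have := H (i + j)%N i (leq_addr _ _); rewrite addKn.
elim/ltn_ind=> k IHk; elim/ltn_ind=> t IHt Htk.
have Ht : (t < k.+1)%N by [].
have E : \sum_(i < k.+1) P i * Q (k - i)%N * P t = 0 by rewrite -mulr_suml Hsum mul0r.
rewrite (bigD1 (Ordinal Ht)) //= in E.
set s := \sum_(i < k.+1 | _) _ in E.
have [Ks Ns] : K s /\ N s.
  apply: (big_ind (fun z => K z /\ N z)) => //.
  - by split => //; exists 1%N; rewrite expr1.
  - by move=> u v [Ku Nu] [Kv Nv]; split; [apply: (Kadd) | apply: Nadd].
  move=> i Hi; split; first by apply: (Kr); apply: (Kr).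
  have Hik : (i <= k)%N by rewrite -ltnS.
  case: (ltngtP i t) => [lt|gt|eq].
  - apply: NmulR => //; first by apply: (Kr).
    by apply: IHt => //; lia.
  - have Hk' : (t + (k - i) < k)%N by lia.
    have := IHk _ Hk' t (leq_addr _ _); rewrite addKn => N1.
    rewrite -mulrA; apply: NmulL => //; first by apply: (Kr).
    by apply: Nswap.
  - by move: Hi; rewrite -(inj_eq val_inj) /= eq eqxx.
have E2 : P t * Q (k - t)%N * P t = - s by apply/eqP; rewrite -addr_eq0 E.
have N2 : N (P t * Q (k - t)%N * P t) by rewrite E2; apply: Nopp.
apply: Nsq; rewrite mulrA; apply: NmulR => //.
by apply: (Kr); apply: (Kr).
Qed.
End Core.
Section Main.
Variables (A B : nzRingType).

Lemma sum_fst n (F : 'I_n -> (A * B)%type) : (\sum_(i < n) F i).1 = \sum_(i < n) (F i).1.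
Proof. by apply: (big_morph fst). Qed.
Lemma sum_snd n (F : 'I_n -> (A * B)%type) : (\sum_(i < n) F i).2 = \sum_(i < n) (F i).2.
Proof. by apply: (big_morph snd). Qed.
Lemma expr_fst (x : (A * B)%type) n : (x ^+ n).1 = x.1 ^+ n.
Proof. by elim: n => [|n IH] //; rewrite !exprS /= IH. Qed.
Lemma expr_snd (x : (A * B)%type) n : (x ^+ n).2 = x.2 ^+ n.
Proof. by elim: n => [|n IH] //; rewrite !exprS /= IH. Qed.
End Main.

Theorem theorem4p1 (A B : nzRingType) (f : {rmorphism A -> B}) (J : B -> Prop) :
  is_proper_ideal J ->
  semicommutative_on (preimage f J) ->
  weak_armendariz_on (image_plus f J) ->
  weak_armendariz_on (amalgamation f J).
Proof.
move=> [Hid _] Hsc Hwa p q Hp Hq pq i j.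
have Hid' : is_ideal (preimage f J).
  case: Hid => J0 Jadd Jopp Jl Jr; split; rewrite /preimage.
  - by rewrite rmorph0.
  - by move=> x y Jx Jy; rewrite rmorphD; apply: Jadd.
  - by move=> x Jx; rewrite rmorphN; apply: Jopp.
  - by move=> r x Jx; rewrite rmorphM; apply: Jl.
  - by move=> r x Jx; rewrite rmorphM; apply: Jr.
have J0 : J 0 by case: Hid.
have Hc k : \sum_(i < k.+1) p`_i * q`_(k - i)%N = 0 by rewrite -coefM pq coef0.
pose p2 := \poly_(i < size p) (p`_i).2.
pose q2 := \poly_(i < size q) (q`_i).2.
have cp2 l : p2`_l = (p`_l).2.
  by rewrite coef_poly; case: ltnP => // H; rewrite nth_default.
have cq2 l : q2`_l = (q`_l).2.
  by rewrite coef_poly; case: ltnP => // H; rewrite nth_default.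
have pq2 : p2 * q2 = 0.
  apply/polyP => k; rewrite coefM coef0.
  transitivity ((\sum_(i < k.+1) p`_i * q`_(k - i)%N).2); last by rewrite Hc.
  by rewrite sum_snd; apply: eq_bigr => l _; rewrite cp2 cq2.
have [n2 H2] : is_nilpotent (p2`_i * q2`_j).
  apply: (Hwa _ _ _ _ pq2 i j).
  - by move=> l; rewrite cp2; case: (Hp l) => a [b [Jb ->]]; exists a, b.
  - by move=> l; rewrite cq2; case: (Hq l) => a [b [Jb ->]]; exists a, b.
rewrite cp2 cq2 in H2.
pose p1 := \poly_(i < size p) f (p`_i).1.
pose q1 := \poly_(i < size q) f (q`_i).1.
have cp1 l : p1`_l = f (p`_l).1.
  by rewrite coef_poly; case: ltnP => // H; rewrite nth_default // rmorph0.
have cq1 l : q1`_l = f (q`_l).1.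
  by rewrite coef_poly; case: ltnP => // H; rewrite nth_default // rmorph0.
have pq1 : p1 * q1 = 0.
  apply/polyP => k; rewrite coefM coef0.
  transitivity (f (\sum_(i < k.+1) p`_i * q`_(k - i)%N).1); last by rewrite Hc rmorph0.
  by rewrite sum_fst rmorph_sum; apply: eq_bigr => l _; rewrite cp1 cq1 rmorphM.
have [n1 H1] : is_nilpotent (p1`_i * q1`_j).
  apply: (Hwa _ _ _ _ pq1 i j).
  - by move=> l; rewrite cp1; exists (p`_l).1, 0; rewrite addr0.
  - by move=> l; rewrite cq1; exists (q`_l).1, 0; rewrite addr0.
rewrite cp1 cq1 -rmorphM -rmorphXn in H1.
set c := (p`_i).1 * (q`_j).1 in H1.
pose u := c ^+ n1.
have Ku : preimage f J u by rewrite /preimage H1.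
case: (Hid') => K0 Kadd Kopp Kl Kr.
have := @core A (preimage f J) Hid' Hsc (fun i => u * (p`_i).1) (fun j => (q`_j).1 * u)
  (fun i => Kr _ _ Ku) (fun j => Kl _ _ Ku).
case/(_ _ i j).
- move=> k.
  transitivity (u * (\sum_(i < k.+1) (p`_i).1 * (q`_(k - i)%N).1) * u).
    by rewrite mulr_sumr mulr_suml; apply: eq_bigr => l _; rewrite !mulrA.
  rewrite (_ : \sum_(i < k.+1) _ = (\sum_(i < k.+1) p`_i * q`_(k - i)%N).1).
    by rewrite Hc mulr0 mul0r.
  by rewrite sum_fst.
move=> m Hm.
have Hcu : u * (p`_i).1 * ((q`_j).1 * u) = c ^+ (n1.+1 + n1).
  by rewrite exprD exprSr /c /u !mulrA.
rewrite Hcu -exprM in Hm.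
exists ((n1.+1 + n1) * m + n2)%N.
have h1 : ((p`_i * q`_j) ^+ ((n1.+1 + n1) * m + n2)).1 = 0.
  by rewrite expr_fst exprD /= -/c Hm mul0r.
have h2 : ((p`_i * q`_j) ^+ ((n1.+1 + n1) * m + n2)).2 = 0.
  by rewrite expr_snd exprD /= H2 mulr0.
by case: ((p`_i * q`_j) ^+ _) h1 h2 => a b /= -> ->.
Qed.
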